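(* Let $p_k\ge0$ ($k\ge1$) with $\sum_k p_k=1$ and $Q_1=\sum_k kp_k<\infty$, let $Q(z)=\sum_k p_kz^k$, and for $q\in(0,1)$ define $\kappa(q)>0$ by $$-\log\kappa(q)=\int_0^{1-q}\Big(\frac{Q_1}{1-Q(z)}-\frac{1}{1-z}\Big)\,dz.$$ Then $\kappa$ is slowly varying at $0$: for every $\lambda>0$, $\kappa(\lambda q)/\kappa(q)\to1$ as $q\to0$. *)

(* Defs.v *)
From Stdlib Require Import Reals.
From Coquelicot Require Import Coquelicot.
Open Scope R_scope.

Definition Qgen (p : nat -> R) (z : R) : R := Series (fun k => p k * z ^ k).

Definition Qmean (p : nat -> R) : R := Series (fun k => INR k * p k).

Definition kappa_integrand (p : nat -> R) (z : R) : R :=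
  Qmean p / (1 - Qgen p z) - 1 / (1 - z).

Definition kappa (p : nat -> R) (q : R) : R :=
  exp (- RInt (kappa_integrand p) 0 (1 - q)).

(* Main.v *)
Require Import Defs.
From Stdlib Require Import Reals Lra Lia.
From Coquelicot Require Import Coquelicot.
Open Scope R_scope.

Lemma Series_nonneg (a : nat -> R) : (forall n, 0 <= a n) -> ex_series a -> 0 <= Series a.
Proof.
  intros Ha Hex.
  pose proof (Series_le (fun n => a n * 0) a) as H.
  rewrite Series_scal_r in H.
  assert (Series a * 0 <= Series a) by (apply H; auto; intros n; split; [lra|]; specialize (Ha n); lra).
  lra.
Qed.

Lemma partial_le (a : nat -> R) (N : nat) :
  (forall n, 0 <= a n) -> ex_series a -> sum_f_R0 a N <= Series a.
Proof.
  intros Ha Hex.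
  rewrite (Series_incr_n a (S N)); [|lia|exact Hex].
  simpl pred.
  assert (0 <= Series (fun k => a (S N + k)%nat)).
  { apply Series_nonneg. intros; apply Ha. apply (ex_series_incr_n a (S N)). exact Hex. }
  lra.
Qed.

Lemma bern (z : R) (k : nat) : 0 <= z <= 1 -> 1 - INR k * (1 - z) <= z ^ k.
Proof.
  intros Hz. induction k as [|k IH].
  - simpl. lra.
  - rewrite S_INR. simpl.
    assert (0 <= INR k) by apply pos_INR.
    assert (z * (1 - INR k * (1 - z)) <= z * z ^ k) by (apply Rmult_le_compat_l; lra).
    assert (0 <= INR k * (1 - z) * (1 - z)) by (apply Rmult_le_pos; [apply Rmult_le_pos|]; lra).
    nra.
Qed.

Lemma low (z : R) (k : nat) : 0 <= z <= 1 -> INR k * z ^ k * (1 - z) <= 1 - z ^ k.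
Proof.
  intros Hz. induction k as [|k IH].
  - simpl. lra.
  - rewrite S_INR. simpl.
    assert (0 <= INR k) by apply pos_INR.
    assert (0 <= z ^ k) by (apply pow_le; lra).
    assert (0 <= INR k * z ^ k * (1 - z)) by (apply Rmult_le_pos; [apply Rmult_le_pos|]; lra).
    assert (0 <= INR k * z ^ k * (1 - z) * (1 - z)) by (apply Rmult_le_pos; lra).
    assert (0 <= z ^ k * (1 - z) * (1 - z)) by (apply Rmult_le_pos; [apply Rmult_le_pos|]; lra).
    nra.
Qed.

Section S2.
Variable p : nat -> R.
Hypothesis p0 : p 0%nat = 0.
Hypothesis pnn : forall k, 0 <= p k.
Hypothesis psum : is_series p 1.
Hypothesis pmean : ex_series (fun k => INR k * p k).

Lemma Sp1 : Series p = 1.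
Proof. apply is_series_unique; exact psum. Qed.

Lemma exp_ : ex_series p.
Proof. exists 1; exact psum. Qed.

Lemma p_le1 n : p n <= 1.
Proof.
  rewrite <- Sp1.
  apply Rle_trans with (sum_f_R0 p n); [|apply partial_le; auto using exp_].
  destruct n; simpl; [lra|].
  pose proof (cond_pos_sum p n pnn). lra.
Qed.

Lemma radius1 : Rbar_le 1 (CV_radius p).
Proof.
  destruct (CV_radius_bounded p) as [H _].
  apply H. exists 1. intros n. rewrite pow1, Rmult_1_r, Rabs_pos_eq; auto using p_le1.
Qed.

Lemma inside z : 0 <= z < 1 -> Rbar_lt (Rabs z) (CV_radius p).
Proof.
  intros Hz. pose proof radius1 as H. rewrite Rabs_pos_eq by lra.
  destruct (CV_radius p); simpl in *; auto; lra.
Qed.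

Lemma exQ z : 0 <= z <= 1 -> ex_series (fun k => p k * z ^ k).
Proof.
  intros Hz. apply (@ex_series_le R_AbsRing R_CompleteNormedModule _ p); [|apply exp_].
  intros n. change (Rabs (p n * z ^ n) <= p n).
  rewrite Rabs_pos_eq.
  - pose proof (pnn n). assert (z ^ n <= 1) by (rewrite <- (pow1 n); apply pow_incr; lra). nra.
  - apply Rmult_le_pos; auto. apply pow_le; lra.
Qed.

Lemma exS z : 0 <= z <= 1 -> ex_series (fun k => p k * (1 - z ^ k)).
Proof.
  intros Hz. apply (@ex_series_le R_AbsRing R_CompleteNormedModule _ p); [|apply exp_].
  intros n. change (Rabs (p n * (1 - z ^ n)) <= p n).
  pose proof (pnn n). assert (z ^ n <= 1) by (rewrite <- (pow1 n); apply pow_incr; lra).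
  assert (0 <= z ^ n) by (apply pow_le; lra).
  rewrite Rabs_pos_eq by nra. nra.
Qed.

Lemma S_eq z : 0 <= z <= 1 -> 1 - Qgen p z = Series (fun k => p k * (1 - z ^ k)).
Proof.
  intros Hz. unfold Qgen.
  rewrite (Series_ext (fun k => p k * (1 - z ^ k)) (fun k => p k - p k * z ^ k)) by (intros; ring).
  rewrite Series_minus; [|apply exp_|apply exQ; auto]. rewrite Sp1. reflexivity.
Qed.

Lemma Q_le z : 0 <= z <= 1 -> Qgen p z <= z.
Proof.
  intros Hz. unfold Qgen.
  apply Rle_trans with (Series (fun k => p k * z)).
  - apply Series_le; [|apply ex_series_scal_r, exp_].
    intros k. pose proof (pnn k). split; [apply Rmult_le_pos; auto; apply pow_le; lra|].
    destruct k as [|m]; [rewrite p0; lra|].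
    assert (z ^ m <= 1) by (rewrite <- (pow1 m); apply pow_incr; lra).
    simpl. assert (z * z ^ m <= z) by nra. nra.
  - rewrite Series_scal_r, Sp1. lra.
Qed.

Lemma Qmean_ge1 : 1 <= Qmean p.
Proof.
  unfold Qmean. rewrite <- Sp1. apply Series_le; auto.
  intros k. split; auto. destruct k as [|m]; [rewrite p0; simpl; lra|].
  rewrite S_INR. pose proof (pos_INR m). pose proof (pnn (S m)). nra.
Qed.

Lemma S_up z : 0 <= z <= 1 -> Series (fun k => p k * (1 - z ^ k)) <= Qmean p * (1 - z).
Proof.
  intros Hz. unfold Qmean. rewrite <- Series_scal_r.
  apply Series_le; [|apply ex_series_scal_r, pmean].
  intros k. pose proof (pnn k). assert (z ^ k <= 1) by (rewrite <- (pow1 k); apply pow_incr; lra).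
  pose proof (bern z k Hz).
  split; nra.
Qed.

Lemma S_low z N : 0 <= z <= 1 ->
  sum_f_R0 (fun k => INR k * p k) N * (1 - INR N * (1 - z)) * (1 - z)
  <= Series (fun k => p k * (1 - z ^ k)).
Proof.
  intros Hz.
  apply Rle_trans with (sum_f_R0 (fun k => p k * (1 - z ^ k)) N).
  2:{ apply partial_le; [|apply exS; auto].
      intros k. pose proof (pnn k). assert (z ^ k <= 1) by (rewrite <- (pow1 k); apply pow_incr; lra). nra. }
  rewrite Rmult_assoc, Rmult_comm, scal_sum.
  apply sum_Rle. intros k Hk.
  pose proof (pnn k). pose proof (low z k Hz). pose proof (bern z k Hz).
  pose proof (le_INR _ _ Hk). pose proof (pos_INR k).
  assert (1 - INR N * (1 - z) <= z ^ k) by nra.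
  assert (0 <= INR k * p k * (1 - z)) by (apply Rmult_le_pos; [apply Rmult_le_pos|]; lra).
  assert (INR k * p k * (1 - z) * (1 - INR N * (1 - z)) <= INR k * p k * (1 - z) * z ^ k)
    by (apply Rmult_le_compat_l; auto).
  nra.
Qed.

Lemma near1 eps : 0 < eps -> exists delta, 0 < delta /\
  forall z, 0 <= z < 1 -> 1 - delta <= z -> Rabs (kappa_integrand p z) * (1 - z) <= eps.
Proof.
  intros Heps.
  pose proof Qmean_ge1 as HM.
  set (M := Qmean p) in *.
  set (eta := M * eps / (2 * (1 + eps))).
  assert (Heta : 0 < eta) by (unfold eta; apply Rdiv_lt_0_compat; nra).
  pose proof (Series_correct _ pmean) as H.
  unfold is_series in H.
  destruct (proj1 (@filterlim_locally nat R_UniformSpace eventually _ _ _) H (mkposreal eta Heta)) as [N HN]. specialize (HN N (le_n N)).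
  change (Rabs (sum_n (fun k => INR k * p k) N - M) < eta) in HN.
  rewrite sum_n_Reals in HN.
  set (A := sum_f_R0 (fun k => INR k * p k) N) in *.
  pose proof (pos_INR N) as HN0.
  exists (eps / ((2 + eps) * (INR N + 1))). split.
  { apply Rdiv_lt_0_compat; nra. }
  intros z Hz Hzd.
  set (d := 1 - z) in *.
  assert (Hd : 0 < d) by (unfold d; lra).
  assert (HNd : INR N * d <= eps / (2 + eps)).
  { apply Rle_trans with ((INR N + 1) * d); [nra|].
    assert (d <= eps / ((2 + eps) * (INR N + 1))) by (unfold d; lra).
    apply Rle_trans with ((INR N + 1) * (eps / ((2 + eps) * (INR N + 1)))).
    - apply Rmult_le_compat_l; lra.
    - right. field. lra. }
  assert (H1Nd : 2 / (2 + eps) <= 1 - INR N * d).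
  { assert (eps / (2 + eps) = 1 - 2 / (2 + eps)) by (field; lra). lra. }
  assert (HA : M - eta <= A) by (apply Rabs_lt_between' in HN; lra).
  assert (HMeta : M - eta = M * (2 + eps) / (2 * (1 + eps))) by (unfold eta; field; lra).
  assert (HMe0 : 0 < M - eta) by (rewrite HMeta; apply Rdiv_lt_0_compat; nra).
  assert (Hc : M <= (1 + eps) * (A * (1 - INR N * d))).
  { apply Rle_trans with ((1 + eps) * ((M - eta) * (2 / (2 + eps)))).
    - right. rewrite HMeta. field. lra.
    - apply Rmult_le_compat_l; [lra|]. apply Rmult_le_compat; try lra.
      apply Rlt_le, Rdiv_lt_0_compat; lra. }
  assert (Hz1 : 0 <= z <= 1) by lra.
  pose proof (S_up z Hz1) as Hup. pose proof (S_low z N Hz1) as Hlow.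
  fold A in Hlow. fold M in Hup. fold d in Hup, Hlow.
  unfold kappa_integrand. fold M. rewrite (S_eq z Hz1). fold d.
  set (S := Series (fun k => p k * (1 - z ^ k))) in *.
  assert (HS : 0 < S).
  { apply Rlt_le_trans with (A * (1 - INR N * d) * d); auto.
    apply Rmult_lt_0_compat; auto. apply Rmult_lt_0_compat; try lra.
    assert (0 < 2 / (2 + eps)) by (apply Rdiv_lt_0_compat; lra). lra. }
  assert (Heq : (M / S - 1 / d) * d = (M * d - S) / S) by (field; lra).
  replace (Rabs (M / S - 1 / d) * d) with (Rabs ((M / S - 1 / d) * d))
    by (rewrite Rabs_mult, (Rabs_pos_eq d) by lra; reflexivity).
  rewrite Heq, Rabs_pos_eq.
  - apply Rmult_le_reg_r with S; auto. unfold Rdiv.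
    rewrite Rmult_assoc, Rinv_l, Rmult_1_r by lra. nra.
  - apply Rmult_le_pos; [lra|]. apply Rlt_le, Rinv_0_lt_compat; auto.
Qed.
End S2.

Section S3.
Variable p : nat -> R.
Hypothesis p0 : p 0%nat = 0.
Hypothesis pnn : forall k, 0 <= p k.
Hypothesis psum : is_series p 1.
Hypothesis pmean : ex_series (fun k => INR k * p k).

Lemma f_cont z : 0 <= z < 1 -> continuous (kappa_integrand p) z.
Proof.
  intros Hz. apply (@ex_derive_continuous R_AbsRing R_NormedModule). unfold kappa_integrand.
  assert (HQ : Qgen p z <= z) by (apply Q_le; auto; lra).
  assert (Hd : ex_derive (Qgen p) z) by (apply (ex_derive_PSeries p z); apply inside; auto).
  auto_derive.
  repeat split; auto; lra.
Qed.

Lemma f_RInt a b : 0 <= a < 1 -> 0 <= b < 1 -> ex_RInt (kappa_integrand p) a b.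
Proof.
  intros Ha Hb. apply (@ex_RInt_continuous R_CompleteNormedModule).
  intros z Hz. apply f_cont.
  split; [apply Rle_trans with (Rmin a b); [apply Rmin_glb|]; lra|].
  apply Rle_lt_trans with (Rmax a b); [lra|]. apply Rmax_lub_lt; lra.
Qed.

Lemma abs_RInt_gen (f : R -> R) x y K :
  ex_RInt f x y -> (forall t, Rmin x y <= t <= Rmax x y -> Rabs (f t) <= K) ->
  Rabs (RInt f x y) <= Rabs (y - x) * K.
Proof.
  intros Hex HK. destruct (Rle_dec x y) as [Hxy|Hxy].
  - rewrite (Rabs_pos_eq (y - x)) by lra. apply abs_RInt_le_const; auto.
    intros t Ht. apply HK. rewrite Rmin_left, Rmax_right; lra.
  - rewrite <- (opp_RInt_swap f y x) by (apply ex_RInt_swap; auto).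
    change (Rabs (- RInt f y x) <= Rabs (y - x) * K). rewrite Rabs_Ropp, (Rabs_left (y - x)) by lra.
    replace (- (y - x)) with (x - y) by ring.
    apply abs_RInt_le_const; [lra| apply ex_RInt_swap; auto|].
    intros t Ht. apply HK. rewrite Rmin_right, Rmax_left; lra.
Qed.

Lemma h_lim lam : 0 < lam ->
  filterlim (fun q => RInt (kappa_integrand p) (1 - q) (1 - lam * q)) (at_right 0) (locally 0).
Proof.
  intros Hlam.
  apply (proj2 (@filterlim_locally R R_UniformSpace (at_right 0) _ _ _)). intros eps.
  pose proof (cond_pos eps) as Heps.
  set (m := Rmin 1 lam).
  assert (Hm : 0 < m) by (unfold m; apply Rmin_glb_lt; lra).
  assert (Hm1 : m <= 1) by apply Rmin_l.
  assert (Hml : m <= lam) by apply Rmin_r.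
  set (a := Rabs (1 - lam)).
  assert (Ha : 0 <= a) by apply Rabs_pos.
  set (e' := eps * m / (2 * (a + 1))).
  assert (He' : 0 < e') by (unfold e'; apply Rdiv_lt_0_compat; nra).
  destruct (near1 p p0 pnn psum pmean e' He') as [delta [Hdel Hz]].
  assert (Hq0 : 0 < Rmin (delta / (1 + lam)) (1 / (1 + lam))).
  { apply Rmin_glb_lt; apply Rdiv_lt_0_compat; lra. }
  exists (mkposreal _ Hq0). intros q Hq Hqpos.
  change (Rabs (q - 0) < Rmin (delta / (1 + lam)) (1 / (1 + lam))) in Hq.
  rewrite Rminus_0_r, Rabs_pos_eq in Hq by lra.
  assert (Hq1 : q * (1 + lam) < delta).
  { apply Rlt_le_trans with (Rmin (delta / (1 + lam)) (1 / (1 + lam)) * (1 + lam)).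
    - apply Rmult_lt_compat_r; lra.
    - apply Rle_trans with (delta / (1 + lam) * (1 + lam)).
      + apply Rmult_le_compat_r; [lra|apply Rmin_l].
      + right; field; lra. }
  assert (Hq2 : q * (1 + lam) < 1).
  { apply Rlt_le_trans with (Rmin (delta / (1 + lam)) (1 / (1 + lam)) * (1 + lam)).
    - apply Rmult_lt_compat_r; lra.
    - apply Rle_trans with (1 / (1 + lam) * (1 + lam)).
      + apply Rmult_le_compat_r; [lra|apply Rmin_r].
      + right; field; lra. }
  assert (Hlq : 0 < lam * q) by nra.
  change (Rabs (RInt (kappa_integrand p) (1 - q) (1 - lam * q) - 0) < eps).
  rewrite Rminus_0_r.
  assert (Hmq : 0 < m * q) by nra.
  apply Rle_lt_trans with (Rabs ((1 - lam * q) - (1 - q)) * (e' / (m * q))).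
  - apply abs_RInt_gen; [apply f_RInt; nra|].
    intros t [Ht1 Ht2].
    assert (Hmin : 1 - delta <= Rmin (1 - q) (1 - lam * q)) by (apply Rmin_glb; nra).
    assert (Hmin0 : 0 <= Rmin (1 - q) (1 - lam * q)) by (apply Rmin_glb; nra).
    assert (Hmax : Rmax (1 - q) (1 - lam * q) <= 1 - m * q) by (apply Rmax_lub; nra).
    assert (Ht : 0 <= t < 1) by lra.
    pose proof (Hz t Ht ltac:(lra)) as Hb.
    assert (Hb2 : Rabs (kappa_integrand p t) * (m * q) <= e').
    { apply Rle_trans with (Rabs (kappa_integrand p t) * (1 - t)); auto.
      apply Rmult_le_compat_l; [apply Rabs_pos|lra]. }
    apply Rmult_le_reg_r with (m * q); auto. unfold Rdiv.
    rewrite Rmult_assoc, Rinv_l, Rmult_1_r by lra. exact Hb2.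
  - replace (1 - lam * q - (1 - q)) with ((1 - lam) * q) by ring.
    rewrite Rabs_mult, (Rabs_pos_eq q) by lra. fold a.
    replace (a * q * (e' / (m * q))) with (eps * (a / (2 * (a + 1)))) by (unfold e'; field; lra).
    assert (a / (2 * (a + 1)) < 1).
    { unfold Rdiv. apply (Rmult_lt_reg_r (2 * (a + 1))); [lra|].
      rewrite Rmult_assoc, Rinv_l, Rmult_1_r by lra. lra. }
    nra.
Qed.
End S3.

Theorem lemma3p8 (p : nat -> R)
  (p0 : p 0%nat = 0)
  (pnn : forall k, 0 <= p k)
  (psum : is_series p 1)
  (pmean : ex_series (fun k => INR k * p k))
  (lambda : R) (hlambda : 0 < lambda) :
  filterlim (fun q => kappa p (lambda * q) / kappa p q) (at_right 0) (locally 1).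
Proof.
  apply (filterlim_ext_loc (fun q => exp (- RInt (kappa_integrand p) (1 - q) (1 - lambda * q)))).
  - assert (Hq0 : 0 < 1 / (1 + lambda)) by (apply Rdiv_lt_0_compat; lra).
    exists (mkposreal _ Hq0). intros q Hq Hqpos.
    change (Rabs (q - 0) < 1 / (1 + lambda)) in Hq.
    rewrite Rminus_0_r, Rabs_pos_eq in Hq by lra.
    assert (Hq2 : q * (1 + lambda) < 1).
    { apply Rlt_le_trans with (1 / (1 + lambda) * (1 + lambda)).
      - apply Rmult_lt_compat_r; lra.
      - right; field; lra. }
    assert (Hlq : 0 < lambda * q) by nra.
    unfold kappa.
    assert (Hch : RInt (kappa_integrand p) 0 (1 - lambda * q) =
      RInt (kappa_integrand p) 0 (1 - q) + RInt (kappa_integrand p) (1 - q) (1 - lambda * q)).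
    { symmetry. apply (RInt_Chasles (V := R_CompleteNormedModule));
        apply f_RInt; auto; nra. }
    rewrite Hch, Ropp_plus_distr, exp_plus. field.
    apply Rgt_not_eq, exp_pos.
  - apply (filterlim_comp _ _ _ _ (fun x => exp (- x)) _ (locally 0)).
    + apply h_lim; auto.
    + assert (Hc : continuous (fun x => exp (- x)) 0).
      { apply (@ex_derive_continuous R_AbsRing R_NormedModule). auto_derive. auto. }
      unfold continuous in Hc. cbv beta in Hc. rewrite Ropp_0, exp_0 in Hc. exact Hc.
Qed.
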